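(* Let $\Sigma$ be a finite alphabet. For every finite language $S \subseteq \Sigma^*$, the string decomposition cost equals the optimal alignment cost: $c_d(S) = c(S)$.
   Context: String decomposition cost: given strings $w_1,\dots,w_n$ (the elements of $S$), a decomposition consists of strings $x_1,\dots,x_m$ and, for each $i$, an integer $l_i \ge 0$ and a strictly increasing function $p_i:\{1,\dots,l_i\}\to\{1,\dots,m\}$ with $w_i = x_{p_i(1)}x_{p_i(2)}\cdots x_{p_i(l_i)}$. The cost of the decomposition is $\sum_{k=1}^m |x_k|$, and $c_d(w_1,\dots,w_n)=c_d(S)$ is the minimum cost over all decompositions. Alignment cost: an alignment tuple is an element $(u_1,\dots,u_n) \in (\Sigma\cup\{\lambda\})^n \setminus \{\lambda\}^n$ ($\lambda$ the empty string) whose non-$\lambda$ entries are all equal to a single symbol $\sigma\in\Sigma$; an alignment of $w_1,\dots,w_n$ is a sequence $t_1\cdots t_m$ of alignment tuples such that for each $i$ the concatenation of the $i$-th components of $t_1,\dots,t_m$ equals $w_i$; its cost is $m$, and $c(S)$ is the minimum alignment cost. *)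

(* Defs.v *)
From mathcomp Require Import all_boot.
From Stdlib Require Import ClassicalEpsilon.
Set Implicit Arguments. Unset Strict Implicit. Unset Printing Implicit Defensive.

(* The least natural number satisfying P (defined classically; any value if
   no least element exists, which never happens for the costs below). *)
Definition min_nat (P : nat -> Prop) : nat :=
  epsilon (inhabits 0) (fun n => P n /\ forall k, P k -> n <= k).

Section Costs.
Variable Sigma : finType.

(* A language S is given as a duplicate-free list w_0, ..., w_{n-1}. *)

Definition is_decomposition (S xs : seq (seq Sigma)) : Prop :=
  forall i, i < size S ->
    exists p : seq nat,
      [/\ sorted ltn p, all (fun j => j < size xs) p &
          nth [::] S i = flatten (map (nth [::] xs) p)].

Definition decomp_cost (xs : seq (seq Sigma)) : nat := sumn (map size xs).

Definition has_decomp_of_cost (S : seq (seq Sigma)) (k : nat) : Prop :=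
  exists xs, is_decomposition S xs /\ decomp_cost xs = k.

Definition c_d (S : seq (seq Sigma)) : nat := min_nat (has_decomp_of_cost S).

(* Alignment tuples: elements of (Sigma u {lambda})^n \ {lambda}^n, lambda = None,
   whose non-lambda entries all equal a single symbol. *)
Definition is_align_tuple (n : nat) (t : seq (option Sigma)) : Prop :=
  [/\ size t = n, has (fun u => u != None) t &
      exists s : Sigma, all (fun u => (u == None) || (u == Some s)) t].

Definition comp_string (u : option Sigma) : seq Sigma :=
  if u is Some a then [:: a] else [::].

Definition is_alignment (S : seq (seq Sigma)) (ts : seq (seq (option Sigma))) : Prop :=
  (forall t, t \in ts -> is_align_tuple (size S) t) /\
  (forall i, i < size S ->
     flatten (map (fun t => comp_string (nth None t i)) ts) = nth [::] S i).

Definition has_align_of_cost (S : seq (seq Sigma)) (m : nat) : Prop :=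
  exists ts, is_alignment S ts /\ size ts = m.

Definition c_align (S : seq (seq Sigma)) : nat := min_nat (has_align_of_cost S).

End Costs.

(* Main.v *)
Require Import Defs.
From mathcomp Require Import all_boot.
From Stdlib Require Import ClassicalEpsilon Classical.
Set Implicit Arguments. Unset Strict Implicit. Unset Printing Implicit Defensive.

Lemma min_nat_spec (P : nat -> Prop) : (exists n, P n) ->
  P (min_nat P) /\ forall k, P k -> min_nat P <= k.
Proof.
move=> [n0 Pn0]; rewrite /min_nat.
apply: (epsilon_spec (inhabits 0) (fun n => P n /\ forall k, P k -> n <= k)).
elim/ltn_ind: n0 Pn0 => n IH Pn.
case: (classic (exists k, P k /\ k < n)) => [[k [Pk kn]]|H].
  exact: IH kn Pk.
exists n; split => // k Pk; rewrite leqNgt; apply/negP => kn; apply: H; by exists k.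
Qed.

Lemma flatten_filter (A B : Type) (q : pred A) (f : A -> seq B) (s : seq A) :
  flatten [seq f k | k <- s & q k] = flatten [seq (if q k then f k else [::]) | k <- s].
Proof. by elim: s => //= a s IH; case: (q a) => /=; rewrite IH. Qed.

Lemma sumn_filter (A : Type) (q : pred A) (f : A -> nat) (s : seq A) :
  sumn [seq f k | k <- s & q k] <= sumn [seq f k | k <- s].
Proof.
elim: s => //= a s IH; case: (q a) => /=; first by rewrite leq_add2l.
exact: leq_trans IH (leq_addl _ _).
Qed.

Lemma sorted_iota_filter (p : seq nat) m : sorted ltn p -> all (fun j => j < m) p ->
  p = [seq k <- iota 0 m | k \in p].
Proof.
move=> sp ap; apply: (irr_sorted_eq ltn_trans ltnn) => //.
  exact: sorted_filter ltn_trans _ _ (iota_ltn_sorted 0 m).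
move=> k; rewrite mem_filter mem_iota add0n /=.
case kp: (k \in p) => //=; by rewrite (allP ap k kp).
Qed.

Section S.
Variable Sigma : finType.

Lemma dec_to_al (S xs : seq (seq Sigma)) : is_decomposition S xs ->
  exists ts, is_alignment S ts /\ size ts <= decomp_cost xs.
Proof.
move=> HD.
pose P i := epsilon (inhabits [::]) (fun p : seq nat => [/\ sorted ltn p,
   all (fun j => j < size xs) p & nth [::] S i = flatten (map (nth [::] xs) p)]).
have HP : forall i, i < size S -> [/\ sorted ltn (P i),
   all (fun j => j < size xs) (P i) & nth [::] S i = flatten (map (nth [::] xs) (P i))].
  by move=> i /HD => E; exact: (epsilon_spec (inhabits [::]) _ E).
pose n := size S; pose m := size xs.
pose used k := has (fun i => k \in P i) (iota 0 n).
pose blk k := [seq [seq (if k \in P i then Some a else None) | i <- iota 0 n] | a <- nth [::] xs k].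
have Hblk : forall i k, i < n -> flatten (map (fun t => comp_string (nth None t i)) (blk k))
    = if k \in P i then nth [::] xs k else [::].
  move=> i k ilt; rewrite /blk -map_comp.
  rewrite (eq_map (g := fun a => comp_string (if k \in P i then Some a else None))); last first.
    by move=> a /=; rewrite (nth_map 0) ?size_iota // nth_iota.
  case: (k \in P i) => /=; elim: (nth [::] xs k) => //= a s ->; done.
exists (flatten [seq blk k | k <- iota 0 m & used k]).
split; [split|].
- move=> t /flatten_mapP [k]; rewrite mem_filter => /andP [uk _] /mapP [a _ ->].
  split; first by rewrite size_map size_iota.
    case/hasP: uk => i ii ki; apply/hasP; exists (Some a) => //.
    by apply/mapP; exists i => //; rewrite ki.
  exists a; apply/allP => u /mapP [i _ ->]; case: ifP => _ /=; by rewrite ?eqxx ?orbT.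
- move=> i ilt.
  have -> : forall ks, flatten (map (fun t => comp_string (nth None t i)) (flatten [seq blk k | k <- ks]))
      = flatten [seq (if k \in P i then nth [::] xs k else [::]) | k <- ks].
    elim=> //= k ks IH; by rewrite map_cat flatten_cat IH Hblk.
  rewrite flatten_filter.
  rewrite (eq_map (g := fun k => if k \in P i then nth [::] xs k else [::])); last first.
    move=> k /=; case uk: (used k) => //; case kp: (k \in P i) => //.
    move/negbT: uk => /hasPn /(_ i); rewrite mem_iota add0n ilt kp => /(_ isT) //.
  have [H1 H2 H3] := HP i ilt.
  by rewrite -flatten_filter -(sorted_iota_filter H1 H2) H3.
- rewrite size_flatten /shape -map_comp.
  apply: leq_trans (sumn_filter _ _ _) _.
  rewrite /decomp_cost -{1}(mkseq_nth [::] xs) /mkseq -map_comp.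
  by apply: eq_leq; apply: congr1; apply: eq_map => k; rewrite /= size_map.
Qed.


Lemma al_to_dec (S : seq (seq Sigma)) ts : is_alignment S ts ->
  has_decomp_of_cost S (size ts).
Proof.
move=> [Ht Hw].
pose m := size ts.
pose xs := [seq take 1 (pmap id t) | t <- ts].
have Hsz : forall t, t \in ts -> size (take 1 (pmap id t)) = 1.
  move=> t /Ht [_ /hasP [u ut un] _].
  case: u ut un => [a|] // aint _.
  have : a \in pmap id t by rewrite mem_pmap map_id.
  case: (pmap id t) => [|x r] //=; by rewrite take0.
exists xs; split; last first.
  rewrite /decomp_cost -map_comp.
  rewrite (eq_in_map (fun t => size (take 1 (pmap id t))) (fun _ => 1) ts).1; last by move=> t /Hsz.
  by elim: (ts) => //= t r ->.
move=> i ilt.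
exists [seq k <- iota 0 m | nth None (nth [::] ts k) i != None].
split.
- exact: sorted_filter ltn_trans _ _ (iota_ltn_sorted 0 m).
  apply/allP => k; rewrite mem_filter mem_iota add0n size_map; case/andP => _ /andP [] //.


  rewrite -Hw ?ilt // flatten_filter -{1}(mkseq_nth [::] ts) /mkseq -map_comp.
  congr flatten; apply/eq_in_map => k; rewrite mem_iota add0n /= => km.
  change (comp_string (nth None (nth [::] ts k) i) = if nth None (nth [::] ts k) i != None then nth [::] xs k else [::]).
  rewrite (nth_map [::]) //.
  have /Ht [_ _ [s /allP As]] := mem_nth [::] km.
  set t := nth [::] ts k in As *.
  case E: (nth None t i) => [a|] //=.
  have isz : i < size t.
    by rewrite ltnNge; apply/negP => /(nth_default None); rewrite E.
  have := As _ (mem_nth None isz); rewrite E /= => /eqP [->].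
  have : a \in pmap id t by rewrite mem_pmap map_id -E mem_nth.
  case Ep: (pmap id t) => [|x r] // _ /=; rewrite take0.
  have : x \in pmap id t by rewrite Ep mem_head.
  by rewrite mem_pmap map_id => /As /eqP [->].
Qed.

Lemma dec_exists (S : seq (seq Sigma)) : exists k, has_decomp_of_cost S k.
Proof.
exists (decomp_cost S); exists S; split => // i ilt.
exists [:: i]; split => //=; by rewrite ?ilt ?cats0.
Qed.

End S.

Theorem lemma3 (Sigma : finType) (S : seq (seq Sigma)) (HS : uniq S) :
  c_d S = c_align S.
Proof.
have [Hd Hdmin] := min_nat_spec (dec_exists S).
have Hex : exists k, has_align_of_cost S k.
  case: Hd => xs [/dec_to_al [ts [Ha _]] _]; by exists (size ts); exists ts.
have [Ha Hamin] := min_nat_spec Hex.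
rewrite -/(c_d S) -/(c_align S) in Hd Hdmin Ha Hamin.
apply/eqP; rewrite eqn_leq; apply/andP; split.
  case: Ha => ts [Hts <-]; apply: Hdmin; exact: al_to_dec.
case: Hd => xs [/dec_to_al [ts [Hts le]] <-].
apply: leq_trans (Hamin _ _) le; by exists ts.
Qed.
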